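(* Let $1\le k<g$ and $v_1,\dots,v_k\in\mathbb{C}^g$ (column vectors). Let $A$ be the $k\times g$ matrix whose $i$-th row is ${}^tv_i$, and define the vector $w=(w_J)_{J\in P^*_{g-k}(X_g)}$ by $w_J=\epsilon(J,X_g\setminus J)\det(A_{X_g\setminus J})$, where $A_{X_g\setminus J}$ is the $k\times k$ submatrix of $A$ with columns in $X_g\setminus J$ and $\epsilon(J,X_g\setminus J)$ is the sign of the permutation rearranging the concatenation of $J$ and $X_g\setminus J$ (each in increasing order) into $(1,2,\dots,g)$. (Thus $w$ is the coordinate vector of $v_1\wedge\dots\wedge v_k$ in the basis $\{\ast_H e_I\}$ given by the Hodge star.) Then \[ v_1{}^tv_1\ast\dots\ast v_k{}^tv_k=\frac{1}{k!}\,w\,{}^tw, \] as matrices indexed by $P^*_{g-k}(X_g)$.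
   Context: Notation: $X_g=\{1,\dots,g\}$; $P^*_k(X)$ is the set of $k$-element subsets of $X$, written increasingly; $M(I,J)$ is the submatrix with rows $I$, columns $J$. Matrices of maps on $\bigwedge^pV$ ($V=\mathbb{C}^g$) are indexed by $P^*_p(X_g)$. For $A$ on $\bigwedge^pV$, $B$ on $\bigwedge^qV$, $p+q\le g$: \[ (A\sqcap B)^H_K=\binom{p+q}{p}^{-1}\sum_{I\in P^*_p(H),\,J\in P^*_p(K)}(-1)^{s_H(I)+s_K(J)}A^I_J\,B^{H\setminus I}_{K\setminus J},\quad H,K\in P^*_{p+q}(X_g), \] with $s_H(I)$ the sum of positions of elements of $I$ within $H$; iterated products are taken left to right. For $g\times g$ matrices $A_1,\dots,A_k$ ($k<g$), the product $A_1\ast\dots\ast A_k$ is the matrix indexed by $P^*_{g-k}(X_g)$ with \[ (A_1\ast\dots\ast A_k)^I_J=(-1)^{|I|_\Sigma+|J|_\Sigma}(A_1\sqcap\dots\sqcap A_k)^{X_g\setminus I}_{X_g\setminus J}, \] where $|I|_\Sigma$ denotes the sum of the elements of $I$. *)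

(* Defs.v *)
From HB Require Import structures.
From mathcomp Require Import all_boot all_order all_algebra.
Set Implicit Arguments. Unset Strict Implicit. Unset Printing Implicit Defensive.
Import Order.TTheory GRing.Theory Num.Theory.
Local Open Scope ring_scope.

(* Index sets: X_g = {1..g} is represented by 'I_g = {0..g-1}, element i <-> i+1.
   P*_p(X_g) is represented by the sets I : {set 'I_g} with #|I| = p.
   A matrix of a map on /\^p V is a function of two such sets. *)
Definition wmx (R : Type) (g : nat) := {set 'I_g} -> {set 'I_g} -> R.

Section Defs.
Variables (R : fieldType) (g : nat).

Definition pos_in (H : {set 'I_g}) (i : 'I_g) : nat := #|[set j in H | (val j <= val i)%N]|.

Definition s_pos (H I : {set 'I_g}) : nat := (\sum_(i in I) pos_in H i)%N.

(* |I|_Sigma : sum of the elements of I (as elements of {1..g}) *)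
Definition sum_elts (I : {set 'I_g}) : nat := (\sum_(i in I) i.+1)%N.

Definition sqcap (p q : nat) (A B : wmx R g) : wmx R g := fun H K =>
  ('C(p + q, p)%:R)^-1 *
  \sum_(I : {set 'I_g} | (I \subset H) && (#|I| == p))
   \sum_(J : {set 'I_g} | (J \subset K) && (#|J| == p))
     (-1) ^+ (s_pos H I + s_pos K J) * A I J * B (H :\: I) (K :\: J).

(* a g x g matrix viewed as a map on /\^1 V (indexed by singletons) *)
Definition of_mx (M : 'M[R]_g) : wmx R g := fun I J =>
  if (#|I| == 1%N) && (#|J| == 1%N) then \sum_(i in I) \sum_(j in J) M i j else 0.

(* left-to-right iterated product P sqcap A_1 sqcap ... , P of degree p *)
Fixpoint sqcap_from (p : nat) (P : wmx R g) (As : seq 'M[R]_g) : wmx R g :=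
  match As with
  | [::] => P
  | A :: As' => sqcap_from p.+1 (sqcap p 1 P (of_mx A)) As'
  end.

Definition sqcap_all (As : seq 'M[R]_g) : wmx R g :=
  match As with
  | [::] => fun _ _ => 0
  | A :: As' => sqcap_from 1 (of_mx A) As'
  end.

Definition star_prod (As : seq 'M[R]_g) : wmx R g := fun I J =>
  (-1) ^+ (sum_elts I + sum_elts J) * sqcap_all As (~: I) (~: J).

Definition inversions (s : seq nat) : nat :=
  (\sum_(a < size s) \sum_(b < size s) ((a < b)%N && (nth 0%N s b < nth 0%N s a)%N))%N.

Definition eps_shuffle (J : {set 'I_g}) : R :=
  (-1) ^+ inversions [seq val i | i <- enum J ++ enum (~: J)].

Definition col_submx (k : nat) (A : 'M[R]_(k, g)) (J : {set 'I_g}) : 'M[R]_k :=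
  \matrix_(i < k, j < k) nth 0 [seq A i c | c <- enum (~: J)] j.

Definition wedge_coord (k : nat) (v : 'I_k -> 'cV[R]_g) (J : {set 'I_g}) : R :=
  let A := \matrix_(i < k, j < g) v i j 0 in
  eps_shuffle J * \det (col_submx A J).

End Defs.

(* Main.v *)
Require Import Defs.
From HB Require Import structures.
From mathcomp Require Import all_boot all_order all_algebra.
From mathcomp Require Import ring zify.
From Stdlib Require Import FunctionalExtensionality.
Set Implicit Arguments. Unset Strict Implicit. Unset Printing Implicit Defensive.
Import Order.TTheory GRing.Theory Num.Theory.
Section Comb.
Variable g : nat.

Lemma sorted_enumH (H : {set 'I_g}) : sorted ltn (map val (enum H)).
Proof.
  rewrite -[enum _](eq_filter (mem_enum _)).
  rewrite -(eq_filter (mem_map val_inj _)) -filter_map.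
  by rewrite (sorted_filter ltn_trans) // unlock val_ord_enum iota_ltn_sorted.
Qed.

Lemma nth_ltE (H : {set 'I_g}) x0 i j : (i < #|H|)%N -> (j < #|H|)%N ->
  (val (nth x0 (enum H) i) < val (nth x0 (enum H) j))%N = (i < j)%N.
Proof.
  move=> hi hj.
  have key : forall a b, (a < #|H|)%N -> (b < #|H|)%N -> (a < b)%N ->
      (val (nth x0 (enum H) a) < val (nth x0 (enum H) b))%N.
    move=> a b ha hb hab.
    rewrite -!(nth_map x0 (val x0) val) -?cardE //.
    apply: (sorted_ltn_nth ltn_trans (val x0) (sorted_enumH H)) => //;
      by rewrite inE size_map -cardE.
  case: (ltngtP i j) => hij.
  - exact: key.
  - by apply/negbTE; rewrite -leqNgt ltnW // key.
  - by rewrite hij ltnn.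
Qed.

Lemma big_set_nth (T : Type) (idx : T) (op : Monoid.com_law idx) (H : {set 'I_g}) x0 (F : 'I_g -> T) :
  \big[op/idx]_(x in H) F x = \big[op/idx]_(j < #|H|) F (nth x0 (enum H) j).
Proof. by rewrite -big_enum (big_nth x0) -cardE big_mkord. Qed.

Lemma sum_ord_ltn n j : (j <= n)%N -> (\sum_(i < n) (i < j)%N)%N = j.
Proof.
  move=> hj; rewrite -(big_mkord xpredT (fun i => nat_of_bool (i < j)%N)).
  rewrite (@big_cat_nat _ _ _ j) /= //.
  rewrite (eq_big_nat _ _ (F2 := fun _ => 1%N)); last by move=> i /andP[_ ->].
  rewrite sum_nat_const_nat subn0 muln1.
  rewrite (eq_big_nat _ _ (F2 := fun _ => 0%N)); last by move=> i /andP[hi _]; rewrite ltnNge hi.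
  by rewrite sum_nat_const_nat muln0 addn0.
Qed.

Lemma cnt_lt_nth (H : {set 'I_g}) x0 j : (j < #|H|)%N ->
  (\sum_(x in H) (val x < val (nth x0 (enum H) j))%N)%N = j.
Proof.
  move=> hj; rewrite (big_set_nth addn _ x0).
  rewrite (eq_bigr (fun i : 'I_#|H| => nat_of_bool (i < j)%N)); last by move=> i _; rewrite nth_ltE.
  by rewrite sum_ord_ltn // ltnW.
Qed.

Lemma cnt_le_nth (H : {set 'I_g}) x0 j : (j < #|H|)%N ->
  (\sum_(x in H) (val x <= val (nth x0 (enum H) j))%N)%N = j.+1.
Proof.
  move=> hj; rewrite (big_set_nth addn _ x0).
  rewrite (eq_bigr (fun i : 'I_#|H| => nat_of_bool (i < j.+1)%N)); last first.
    by move=> i _; rewrite leqNgt nth_ltE // -leqNgt ltnS.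
  by rewrite sum_ord_ltn.
Qed.

Lemma pos_in_sum (H : {set 'I_g}) x : pos_in H x = (\sum_(y in H) (val y <= val x)%N)%N.
Proof.
  rewrite /pos_in -sum1_card big_mkcond [RHS]big_mkcond /=.
  by apply: eq_bigr => y _; rewrite inE; case: (y \in H); case: (val y <= val x)%N.
Qed.

Lemma pos_nth (H : {set 'I_g}) x0 j : (j < #|H|)%N -> pos_in H (nth x0 (enum H) j) = j.+1.
Proof. by move=> hj; rewrite pos_in_sum cnt_le_nth. Qed.

Definition Ssum n := (\sum_(j < n) j.+1)%N.

Lemma s_pos_full (H : {set 'I_g}) : s_pos H H = Ssum #|H|.
Proof.
  case: (posnP #|H|) => [/eqP|hH].
    by rewrite cards_eq0 => /eqP ->; rewrite /s_pos big_set0 /Ssum cards0 big_ord0.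
  have /card_gt0P [x0 _] := hH.
  rewrite /s_pos (big_set_nth addn _ x0) /Ssum; apply: eq_bigr => j _.
  by rewrite pos_nth.
Qed.

Lemma enum_setD1 (H : {set 'I_g}) h : enum (H :\ h) = rem h (enum H).
Proof.
  rewrite rem_filter ?enum_uniq // /enum_mem -filter_predI.
  by apply: eq_filter => x /=; rewrite !inE.
Qed.

Lemma nth_rem_bump (T : eqType) (s : seq T) x0 j b : uniq s -> (j < size s)%N ->
  nth x0 (rem (nth x0 s j) s) b = nth x0 s (bump j b).
Proof.
  move=> us hj; rewrite remE index_uniq // nth_cat size_take hj.
  rewrite /bump; case: ltnP => hb.
    by rewrite nth_take // add0n leqNgt hb.
  by rewrite nth_drop addSn subnKC.
Qed.

End Comb.
Lemma count_sum (r : seq nat) (a : pred nat) :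
  count a r = (\sum_(b < size r) a (nth 0 r b))%N.
Proof.
  rewrite -sum1_count big_mkcond (big_nth 0) big_mkord.
  by apply: eq_bigr => b _; case: (a _).
Qed.

Lemma inv_cons x t : inversions (x :: t) = (count (fun y => y < x) t + inversions t)%N.
Proof.
  rewrite /inversions /= big_ord_recl /= big_ord_recl /= add0n count_sum.
  congr (_ + _)%N; apply: eq_bigr => b _.
  rewrite big_ord_recl /= add0n; apply: eq_bigr => c _.
  by rewrite /bump !leq0n !add1n !add0n ltnS.
Qed.

Lemma count_lt_sorted x t : sorted ltn (x :: t) -> count (fun y => y < x) t = 0%N.
Proof.
  move=> /= /(order_path_min ltn_trans) hall.
  rewrite -(count_pred0 t); apply: eq_in_count => y hy /=.
  by move/allP: hall => /(_ y hy) hxy; rewrite ltnNge ltnW.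
Qed.

Lemma inv_sorted s : sorted ltn s -> inversions s = 0%N.
Proof.
  elim: s => [|x t IH] hs; first by rewrite /inversions big_ord0.
  rewrite inv_cons count_lt_sorted // IH //; exact: path_sorted hs.
Qed.

Lemma inv_sorted_cat s1 s2 : sorted ltn s1 -> sorted ltn s2 ->
  inversions (s1 ++ s2) = (\sum_(x <- s1) count (fun y => y < x) s2)%N.
Proof.
  elim: s1 => [|x t IH] h1 h2; first by rewrite big_nil inv_sorted.
  rewrite cat_cons inv_cons count_cat count_lt_sorted // add0n big_cons IH //.
  exact: path_sorted h1.
Qed.

Section Eps.
Variable g : nat.

Lemma count_enum_val (A : {set 'I_g}) (P : pred nat) :
  count P (map val (enum A)) = (\sum_(y in A) P (val y))%N.
Proof.
  rewrite count_map -sum1_count big_enum_cond big_mkcond [RHS]big_mkcond /=.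
  by apply: eq_bigr => y _; case: (y \in A); case: (P _).
Qed.

Lemma eps_sum (I : {set 'I_g}) :
  (inversions [seq val i | i <- enum I ++ enum (~: I)] + Ssum #|I|)%N = sum_elts I.
Proof.
  rewrite map_cat inv_sorted_cat ?sorted_enumH // big_map big_enum /=.
  have E1 : forall i : 'I_g, (count (fun y => y < val i) (map val (enum (~: I)))
       + \sum_(y in I) (val y < val i))%N = val i.
    move=> i; rewrite count_enum_val.
    rewrite -[RHS](sum_ord_ltn (ltnW (ltn_ord i))) (bigID (mem I) predT) /= addnC.
    by congr (_ + _)%N; apply: eq_bigl => y; rewrite !inE.
  have E2 : (\sum_(i in I) \sum_(y in I) (val y < val i))%N = (\sum_(j < #|I|) j)%N.
    case: (posnP #|I|) => [/eqP|hI].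
      by rewrite cards_eq0 => /eqP ->; rewrite big_set0 cards0 big_ord0.
    have /card_gt0P [x0 _] := hI.
    rewrite (big_set_nth addn _ x0); apply: eq_bigr => j _.
    by rewrite cnt_lt_nth.
  have E3 : sum_elts I = (\sum_(i in I) val i + #|I|)%N.
    rewrite /sum_elts (eq_bigr (fun i : 'I_g => val i + 1)%N); last by move=> i _; rewrite addn1.
    by rewrite big_split /= sum1_card.
  have E4 : Ssum #|I| = (\sum_(j < #|I|) j + #|I|)%N.
    rewrite /Ssum (eq_bigr (fun j : 'I_#|I| => val j + 1)%N); last by move=> j _; rewrite addn1.
    by rewrite big_split /= sum1_card card_ord.
  rewrite E3 E4 addnA -E2 -big_split /=; congr (_ + _)%N.
  by apply: eq_big => // i _; rewrite E1.
Qed.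

End Eps.
Local Open Scope ring_scope.
Section Alg.
Variables (R : numFieldType) (g : nat) (u : nat -> 'I_g -> R).

Lemma sign_eq a b : odd a = odd b -> (-1) ^+ a = (-1) ^+ b :> R.
Proof. by move=> e; rewrite -signr_odd e signr_odd. Qed.

Definition Mat n (H : {set 'I_g}) : 'M[R]_n :=
  \matrix_(i < n, j < n) nth 0 [seq u i c | c <- enum H] j.

Definition bvn i (H : {set 'I_g}) : R :=
  if #|H| == 1%N then \sum_(h in H) u i h else 0.

Definition wst p (a b : {set 'I_g} -> R) (H : {set 'I_g}) : R :=
  \sum_(I : {set 'I_g} | (I \subset H) && (#|I| == p))
     (-1) ^+ (s_pos H I) * a I * b (H :\: I).

Fixpoint Efun n : {set 'I_g} -> R :=
  match n with 0 => bvn 0 | n'.+1 => wst n'.+1 (Efun n') (bvn n'.+1) end.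

Fixpoint csg n : nat := match n with 0 => 0 | n'.+1 => csg n' + Ssum n'.+2 + n' end.

Lemma big_set_nthn (T : Type) (idx : T) (op : Monoid.com_law idx) (H : {set 'I_g}) x0 n
  (F : 'I_g -> T) : #|H| = n ->
  \big[op/idx]_(x in H) F x = \big[op/idx]_(j < n) F (nth x0 (enum H) j).
Proof. by move=> <-; apply: big_set_nth. Qed.

Lemma wst_step p a i (H : {set 'I_g}) : #|H| = p.+1 ->
  wst p a (bvn i) H = \sum_(h in H) (-1) ^+ (s_pos H (H :\ h)) * a (H :\ h) * u i h.
Proof.
  move=> HH; rewrite /wst.
  have -> : \sum_(I : {set 'I_g} | (I \subset H) && (#|I| == p))
        (-1) ^+ (s_pos H I) * a I * bvn i (H :\: I)
      = \sum_(I in [set H :\ h | h in H]) (-1) ^+ (s_pos H I) * a I * bvn i (H :\: I).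
    apply: eq_bigl => I; apply/andP/imsetP => [[sIH /eqP cI] | [h hH ->]].
    - have /cards1P [h hD] : #|H :\: I| == 1%N.
        by rewrite cardsD (setIidPr sIH) cI HH subSnn.
      have : h \in H :\: I by rewrite hD set11.
      rewrite inE => /andP [_ hH]; exists h => //.
      by rewrite -hD setDDr setDv set0U (setIidPr sIH).
    - split; first exact: subD1set.
      by move: HH; rewrite (cardsD1 h) hH add1n => -[->].
  rewrite big_imset; last first.
    move=> x y hx hy e; have : x \notin H :\ x by rewrite !inE eqxx.
    by rewrite e !inE hx andbT negbK => /eqP.
  apply: eq_bigr => h hH.
  have -> : H :\: (H :\ h) = [set h].
    by rewrite setDDr setDv set0U; apply/setIidPr; rewrite sub1set.
  by rewrite /bvn cards1 eqxx big_set1.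
Qed.

Lemma Efun_det n (H : {set 'I_g}) : #|H| = n.+1 ->
  Efun n H = (-1) ^+ (csg n) * \det (Mat n.+1 H).
Proof.
  elim: n H => [|n IH] H HH.
    move/eqP: HH => /cards1P [h ->].
    by rewrite /= /bvn cards1 eqxx big_set1 det_mx11 mxE enum_set1 /= expr0 mul1r.
  have /card_gt0P [x0 _] : (0 < #|H|)%N by rewrite HH.
  rewrite /= wst_step // (@big_set_nthn _ _ _ H x0 _ _ HH) (expand_det_row _ ord_max) big_distrr /=.
  apply: eq_bigr => j _.
  have hj : (j < #|H|)%N by rewrite HH.
  set h := nth x0 (enum H) j.
  have hH : h \in H by rewrite -mem_enum mem_nth // -cardE.
  have cD : #|H :\ h| = n.+1 by move: HH; rewrite (cardsD1 h) hH add1n => -[].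
  rewrite IH //.
  have -> : Mat n.+2 H ord_max j = u n.+1 h.
    by rewrite mxE (nth_map x0) // -cardE.
  rewrite /cofactor.
  have -> : row' ord_max (col' j (Mat n.+2 H)) = Mat n.+1 (H :\ h).
    apply/matrixP => a b; rewrite !mxE.
    rewrite (nth_map x0); last by rewrite -cardE HH ltn_ord.
    rewrite (nth_map x0); last by rewrite -cardE cD.
    rewrite enum_setD1 nth_rem_bump ?enum_uniq // -?cardE //.
    by rewrite /= /bump leqNgt ltn_ord.
  have E : (s_pos H (H :\ h) + j.+1)%N = Ssum n.+2.
    have -> : Ssum n.+2 = s_pos H H by rewrite s_pos_full HH.
    rewrite /s_pos [X in _ = X](bigD1 h) //= addnC.
    rewrite pos_nth //; congr (_ + _)%N; apply: eq_bigl => x.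
    by rewrite !inE andbC.
  have sgE : (-1) ^+ (s_pos H (H :\ h)) * (-1) ^+ (csg n)
      = (-1) ^+ (csg n + Ssum n.+2 + n) * (-1) ^+ (n.+1 + j) :> R.
    rewrite -!exprD; apply: sign_eq; rewrite -E.
    rewrite !oddD /=; case: (odd _); case: (odd j); case: (odd n); case: (odd (csg n)); by [].
  rewrite /cofactor.
  transitivity ((-1) ^+ (s_pos H (H :\ h)) * (-1) ^+ (csg n) * (\det (Mat n.+1 (H :\ h)) * u n.+1 h)).
    ring.
  rewrite sgE /=; ring.
Qed.

End Alg.
Section Sq.
Variables (R : numFieldType) (g : nat) (u : nat -> 'I_g -> R).

Lemma of_mx_outer (w : 'cV[R]_g) i : (forall h, w h 0 = u i h) ->
  of_mx (w *m w^T) = fun I J => bvn u i I * bvn u i J.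
Proof.
  move=> hw; apply: functional_extensionality => I; apply: functional_extensionality => J.
  rewrite /of_mx /bvn; case: (#|I| == 1%N); case: (#|J| == 1%N) => /=; rewrite ?mulr0 ?mul0r //.
  rewrite big_distrl; apply: eq_bigr => x _; rewrite big_distrr; apply: eq_bigr => y _.
  by rewrite mxE big_ord1 !mxE hw hw.
Qed.

Lemma sqcap_outer p (s : R) (a b : {set 'I_g} -> R) :
  sqcap p 1 (fun H K => s * (a H * a K)) (fun H K => b H * b K)
  = fun H K => s / (p.+1)%:R * (wst p a b H * wst p a b K).
Proof.
  apply: functional_extensionality => H; apply: functional_extensionality => K.
  rewrite /sqcap /wst addn1 binSn.
  rewrite mulr_suml [RHS]mulr_sumr big_distrr /=; apply: eq_bigr => I _.
  rewrite [RHS]mulrA !big_distrr /=; apply: eq_big => // J _.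
  rewrite exprD; ring.
Qed.

Fixpoint dfrom p (a : {set 'I_g} -> R) (l : seq nat) : {set 'I_g} -> R :=
  match l with [::] => a | i :: l' => dfrom p.+1 (wst p a (bvn u i)) l' end.

Fixpoint sfrom p (s : R) (l : seq nat) : R :=
  match l with [::] => s | _ :: l' => sfrom p.+1 (s / (p.+1)%:R) l' end.

Lemma sqcap_from_outer (W : nat -> 'M[R]_g) :
  (forall i, of_mx (W i) = fun I J => bvn u i I * bvn u i J) ->
  forall l p s a, sqcap_from p (fun H K => s * (a H * a K)) [seq W i | i <- l]
   = fun H K => sfrom p s l * (dfrom p a l H * dfrom p a l K).
Proof.
  move=> hW; elim => [|i l IH] p s a //=.
  by rewrite hW sqcap_outer IH.
Qed.

Lemma sfromE l : forall p s, sfrom p s l = s / (\prod_(t < size l) (p + t).+1)%N%:R.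
Proof.
  elim: l => [|i l IH] p s /=; first by rewrite big_ord0 divr1.
  rewrite IH big_ord_recl /= natrM invfM mulrA.
  congr (_ / _ / _).
    by rewrite addn0.
  congr (_%:R); apply: eq_big => // t _.
  by rewrite /bump /= add1n addSnnS.
Qed.

Lemma prod_fact n : (\prod_(t < n) (1 + t).+1)%N = n.+1`!.
Proof.
  elim: n => [|n IH]; first by rewrite big_ord0.
  by rewrite big_ord_recr /= IH factS mulnC.
Qed.

Lemma dfrom_rcons l : forall p a i,
  dfrom p a (rcons l i) = wst (p + size l)%N (dfrom p a l) (bvn u i).
Proof.
  elim: l => [|j l IH] p a i /=; first by rewrite addn0.
  by rewrite IH addnS.
Qed.

Lemma dfrom_iota n : dfrom 1 (bvn u 0) (iota 1 n) = Efun u n.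
Proof.
  elim: n => [|n IH] //.
  by rewrite -[n.+1]addn1 iotaD cats1 dfrom_rcons IH size_iota add1n addn1.
Qed.

End Sq.
Unset Implicit Arguments.
Theorem lemma2p3 (R : numClosedFieldType) (g k : nat) (hk1 : (1 <= k)%N) (hkg : (k < g)%N)
  (v : 'I_k -> 'cV[R]_g) (I J : {set 'I_g})
  (hI : #|I| = (g - k)%N) (hJ : #|J| = (g - k)%N) :
  star_prod [seq v i *m (v i)^T | i <- enum 'I_k] I J
  = (k`!%:R)^-1 * wedge_coord v I * wedge_coord v J.
Proof.
  have [k' ek] : exists k', k = k'.+1 by case: k hk1 {hkg v hI hJ} => // k' _; exists k'.
  subst k.
  pose u := fun (n : nat) (c : 'I_g) => v (inord n) c 0.
  pose W := fun n : nat => v (inord n) *m (v (inord n))^T.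
  have hW : forall i, of_mx (W i) = fun I J => bvn u i I * bvn u i J.
    by move=> i; apply: of_mx_outer.
  have eL : [seq v i *m (v i)^T | i <- enum 'I_k'.+1] = W 0%N :: [seq W n | n <- iota 1 k'].
    rewrite -[_ :: _]/(map W (iota 0 k'.+1)) -val_enum_ord -map_comp.
    by apply: eq_map => i /=; rewrite /W inord_val.
  have cC : forall K : {set 'I_g}, #|K| = (g - k'.+1)%N -> #|~: K| = k'.+1.
    move=> K hK; have := cardsC K; rewrite card_ord hK; lia.
  rewrite /star_prod eL /= (_ : of_mx (W 0%N) = fun I J => 1 * (bvn u 0 I * bvn u 0 J)); last first.
    by rewrite hW; apply: functional_extensionality => X; apply: functional_extensionality => Y; rewrite mul1r.
  rewrite (sqcap_from_outer hW) sfromE dfrom_iota (Efun_det u (cC _ hI)) (Efun_det u (cC _ hJ)).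
  rewrite size_iota prod_fact div1r /wedge_coord /eps_shuffle /=.
  have cM : forall K, col_submx (\matrix_(i < k'.+1, j < g) v i j 0) K = Mat u k'.+1 (~: K).
    move=> K; apply/matrixP => a b; rewrite !mxE; congr nth; apply: eq_map => c.
    by rewrite mxE /u inord_val.
  rewrite !cM -(eps_sum I) -(eps_sum J) hI hJ.
  set iI := inversions _; set iJ := inversions _.
  set S := Ssum _; set c := csg k'.
  set dI := \det _; set dJ := \det _.
  have sg : (-1) ^+ (iI + S + (iJ + S)) * ((-1) ^+ c * (-1) ^+ c) = (-1) ^+ iI * (-1) ^+ iJ :> R.
    rewrite -!exprD; apply: sign_eq; rewrite !oddD.
    by case: (odd iI); case: (odd iJ); case: (odd S); case: (odd c).
  clearbody iI iJ S c dI dJ.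
  transitivity ((-1) ^+ (iI + S + (iJ + S)) * ((-1) ^+ c * (-1) ^+ c) * ((k'.+1)`!%:R^-1 * dI * dJ)).
    ring.
  rewrite sg; ring.
Qed.
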